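(* Let $\mathcal{M}$ be a complete Riemannian submanifold of $\mathbb{R}^n$ with the induced Riemannian metric, $f:\mathbb{R}^n\to\mathbb{R}$ proper lower semicontinuous, $\tilde f$ a smoothing function of $f$, and $R$ a retraction on $\mathcal{M}$. Assume that for every $\bar\mu>0$ and every $\bar x\in\mathcal{M}$ the level set $\{x\in\mathcal{M}:\tilde f(x,\bar\mu)\le\tilde f(\bar x,\bar\mu)\}$ is compact. Let $\{x_\ell\}$ be an infinite sequence generated by the Riemannian smoothing steepest descent method (RSSD) described below with $\delta_{opt}=\mu_{opt}=0$, and let $K=\{\ell:\|\eta_\ell\|\le\delta_\ell\}$. Then $K$ is an infinite set and \[ \lim_{\ell\to\infty,\ \ell\in K}\delta_\ell=0,\qquad \lim_{\ell\to\infty,\ \ell\in K}\mu_\ell=0 . \]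
   Context: Smoothing function: $\tilde f:\mathbb{R}^n\times\mathbb{R}_+\to\mathbb{R}$ with $\tilde f(\cdot,\mu)$ continuously differentiable for each $\mu>0$, $\lim_{z\to x,\mu\downarrow0}\tilde f(z,\mu)=f(x)$, and $|\tilde f(x,\mu)-f(x)|\le\kappa\omega(\mu)$ for some $\kappa>0$, $\omega:(0,\infty)\to(0,\infty)$ with $\omega(\mu)\to0$. Retraction: smooth $R:T\mathcal{M}\to\mathcal{M}$ with $R_x(0_x)=x$ and $dR_x(0_x)=\mathrm{id}_{T_x\mathcal{M}}$, $R_x$ being the restriction to the tangent space $T_x\mathcal{M}$. $\operatorname{grad}\tilde f(x,\mu)=\operatorname{Proj}_{T_x\mathcal{M}}\nabla_x\tilde f(x,\mu)$. RSSD: inputs $x_0\in\mathcal{M}$, $\delta_{opt}\ge0$, $\delta_0>0$, $\mu_{opt}\ge0$, $\mu_0>0$, $\beta\in(0,1)$, $\bar\alpha>0$, $\theta_\delta\in(0,1)$, $\theta_\mu\in(0,1)$, $\sigma\in(0,1)$. For $\ell=0,1,2,\dots$: compute $\eta_\ell=-\operatorname{grad}\tilde f(x_\ell,\mu_\ell)$. If $\|\eta_\ell\|\le\delta_{opt}$ and $\mu_\ell\le\mu_{opt}$, stop. Else if $\|\eta_\ell\|\le\delta_\ell$, set $\mu_{\ell+1}=\theta_\mu\mu_\ell$, $\delta_{\ell+1}=\theta_\delta\delta_\ell$, $x_{\ell+1}=x_\ell$. Otherwise set $\mu_{\ell+1}=\mu_\ell$, $\delta_{\ell+1}=\delta_\ell$,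 let $t_\ell=\beta^m\bar\alpha$ where $m$ is the smallest nonnegative integer with $\tilde f(R_{x_\ell}(\beta^m\bar\alpha\eta_\ell),\mu_\ell)\le\tilde f(x_\ell,\mu_\ell)-\sigma\beta^m\bar\alpha\|\operatorname{grad}\tilde f(x_\ell,\mu_\ell)\|^2$, and set $x_{\ell+1}=R_{x_\ell}(t_\ell\eta_\ell)$. *)

(* Defs.v *)
From HB Require Import structures.
From mathcomp Require Import all_boot all_order all_algebra.
From mathcomp Require Import all_classical all_reals all_analysis.
Set Implicit Arguments. Unset Strict Implicit. Unset Printing Implicit Defensive.
Import Order.TTheory GRing.Theory Num.Theory.
Import numFieldNormedType.Exports.
Local Open Scope classical_set_scope.
Local Open Scope ring_scope.

Section Defs.
Variable R : realType.

Fixpoint Ck {U W : normedModType R} (k : nat) (A : set U) (f : U -> W) : Prop :=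
  match k with
  | 0%N => {in A, continuous f}
  | k'.+1 => (forall x v, A x -> derivable f x v) /\
             (forall v, Ck k' A (fun x => derive f x v))
  end.

Definition smooth_on {U W : normedModType R} (A : set U) (f : U -> W) :=
  forall k, Ck k A f.

Variable n : nat.
Local Notation V := 'rV[R]_n.

Definition dotv (u v : V) : R := \sum_(i < n) u ord0 i * v ord0 i.
Definition enorm (v : V) : R := Num.sqrt (dotv v v).

Definition embedded_submanifold (M : set V) : Prop :=
  exists d : nat, (d <= n)%N /\
    forall x, M x -> exists (U : set V) (F : V -> 'rV[R]_(n - d)),
      [/\ open U, U x, smooth_on U F,
          (forall y, U y -> M y -> forall w, exists v, derive F y v = w) &
          (forall y, U y -> (M y <-> F y = 0))].

Definition tangent (M : set V) (x : V) : set V :=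
  [set v | exists (g : R -> V) (e : R), [/\ 0 < e,
      (forall t, `|t| < e -> M (g t)), g 0 = x,
      derivable g 0 1 & derive g 0 1 = v]].

Definition tangent_bundle (M : set V) : set (V * V) :=
  [set p | M p.1 /\ tangent M p.1 p.2].

Definition orth_proj (S : set V) (g : V) : V :=
  xget 0 [set p | S p /\ forall w, S w -> dotv (g - p) w = 0].

Definition egrad (h : V -> R) (x : V) : V :=
  \row_(i < n) derive h x (delta_mx ord0 i : V).

Definition rgrad (M : set V) (ft : V -> R -> R) (x : V) (mu : R) : V :=
  orth_proj (tangent M x) (egrad (fun z => ft z mu) x).

Definition curve_length (g : R -> V) : \bar R :=
  ereal_sup [set l | exists (k : nat) (t : nat -> R),
     [/\ t 0%N = 0, t k = 1, (forall i, (i < k)%N -> t i <= t i.+1) &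
         l = (\sum_(i < k) enorm (g (t i.+1) - g (t i)))%:E]].

Definition mdist (M : set V) (x y : V) : \bar R :=
  ereal_inf [set L | exists g : R -> V,
     [/\ continuous g, (forall t, 0 <= t <= 1 -> M (g t)), g 0 = x, g 1 = y &
         L = curve_length g]].

Definition complete_manifold (M : set V) : Prop :=
  forall u : nat -> V, (forall k, M (u k)) ->
    (forall e : R, 0 < e -> exists N, forall p q, (N <= p)%N -> (N <= q)%N ->
        (mdist M (u p) (u q) < e%:E)%E) ->
    exists y, M y /\ forall e : R, 0 < e -> exists N, forall p, (N <= p)%N ->
        (mdist M (u p) y < e%:E)%E.

Definition lsc_fun (f : V -> R) : Prop :=
  forall x (e : R), 0 < e -> \forall y \near x, f x - e < f y.

Definition smoothing_function (f : V -> R) (ft : V -> R -> R) : Prop :=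
  (forall mu, 0 < mu -> Ck 1 setT (fun z => ft z mu)) /\
  (forall x, (fun p : V * R => ft p.1 p.2) @ filter_prod (nbhs x) (0^'+) --> f x) /\
  exists (kappa : R) (omega : R -> R),
    [/\ 0 < kappa, (forall mu, 0 < mu -> 0 < omega mu),
        omega x @[x --> 0^'+] --> 0 &
        forall x mu, 0 < mu -> `|ft x mu - f x| <= kappa * omega mu].

Definition retraction (M : set V) (Rt : V -> V -> V) : Prop :=
  [/\ (forall x v, tangent_bundle M (x, v) -> M (Rt x v)),
      (forall p, tangent_bundle M p -> exists (W : set (V * V)) (G : V * V -> V),
          [/\ open W, W p, smooth_on W G &
              forall q, W q -> tangent_bundle M q -> G q = Rt q.1 q.2]),
      (forall x, M x -> Rt x 0 = x) &
      (forall x v, M x -> tangent M x v ->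
          derivable (fun t : R => Rt x (t *: v)) 0 1 /\
          derive (fun t : R => Rt x (t *: v)) 0 1 = v)].

Definition RSSD (M : set V) (ft : V -> R -> R) (Rt : V -> V -> V)
  (x0 : V) (delta_opt delta0 mu_opt mu0 beta abar th_delta th_mu sigma : R)
  (x : nat -> V) (mu delta : nat -> R) : Prop :=
  [/\ x 0%N = x0, mu 0%N = mu0, delta 0%N = delta0 &
   forall l : nat,
    let eta := - rgrad M ft (x l) (mu l) in
    ~ (enorm eta <= delta_opt /\ mu l <= mu_opt) /\
    (if (enorm eta <= delta l) then
       [/\ mu l.+1 = th_mu * mu l, delta l.+1 = th_delta * delta l & x l.+1 = x l]
     else
       [/\ mu l.+1 = mu l, delta l.+1 = delta l &
         exists m : nat,
           let armijo k := ft (Rt (x l) ((beta ^+ k * abar) *: eta)) (mu l) <=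
                ft (x l) (mu l) - sigma * (beta ^+ k * abar) *
                  enorm (rgrad M ft (x l) (mu l)) ^+ 2 in
           [/\ armijo m, (forall k, (k < m)%N -> ~ armijo k) &
               x l.+1 = Rt (x l) ((beta ^+ m * abar) *: eta)]])].

End Defs.

(* Main.v *)
Require Import Defs.
Set Warnings "-notation-overridden,-ambiguous-paths,-notation-incompatible-prefix".
From HB Require Import structures.
From mathcomp Require Import all_boot all_order all_algebra.
From mathcomp Require Import all_classical all_reals all_analysis.
From mathcomp Require Import ring lra.
Import Order.TTheory GRing.Theory Num.Theory.
Import numFieldNormedType.Exports.
Local Open Scope classical_set_scope.
Local Open Scope ring_scope.
Section L1.
Variable R : realType.

Lemma seg_le (phi : R -> R) (a b L e : R) : a <= b ->
  (forall t, a <= t <= b -> derivable phi t 1 /\ `|derive phi t 1 - L| <= e) ->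
  `|phi b - phi a - L * (b - a)| <= e * `|b - a|.
Proof.
move=> ab H.
have dcont : {within `[a, b], continuous phi}.
  apply: derivable_within_continuous => t; rewrite in_itv /= => /andP[? ?].
  by case: (H t) => //; apply/andP.
have dH : forall t, t \in `]a, b[%R -> is_derive t 1 phi (derive phi t 1).
  move=> t; rewrite in_itv /= => /andP[u v].
  apply: derivableP; apply: (proj1 (H t _)); apply/andP; split; exact: ltW.
have [c cab ->] := @MVT_segment R phi (fun t => derive phi t 1) a b ab dH dcont.
move: cab; rewrite in_itv /= => /andP[c1 c2].
rewrite -mulrBl normrM ler_wpM2r //.
by case: (H c) => //; rewrite c1 c2.
Qed.

Lemma seg_any (phi : R -> R) (a b L e : R) :
  (forall t, Num.min a b <= t <= Num.max a b ->
     derivable phi t 1 /\ `|derive phi t 1 - L| <= e) ->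
  `|phi b - phi a - L * (b - a)| <= e * `|b - a|.
Proof.
case: (leP a b) => ab H.
- exact: seg_le.
- have -> : `|phi b - phi a - L * (b - a)| = `|phi a - phi b - L * (a - b)|.
    by rewrite -normrN; congr `|_|; ring.
  rewrite (distrC b a); apply: seg_le => //; exact: ltW.
Qed.

Variable X : normedModType R.

Lemma line_derive (f : X -> R) (y b : X) (t : R) :
  derivable f (y + t *: b) b ->
  derivable (fun u : R => f (y + u *: b)) t 1 /\
  derive (fun u : R => f (y + u *: b)) t 1 = derive f (y + t *: b) b.
Proof.
have E : (fun h : R => h^-1 *: (((fun u : R => f (y + u *: b)) \o shift t) (h *: 1)
              - f (y + t *: b))) =
         (fun h : R => h^-1 *: ((f \o shift (y + t *: b)) (h *: b) - f (y + t *: b))).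
  apply/funext => h /=; congr (_ *: (f _ - _)).
  by rewrite [_%:A]mulr1 scalerDl addrCA addrA.
by rewrite /derivable /derive E.
Qed.

Lemma key_core (f : X -> R) (p : X) (I : Type) (b : I -> X) (D : I -> R) (r e : R) :
  (forall j, `|b j| <= 1) ->
  (forall j y, `|y - p| < r -> derivable f y (b j) /\ `|derive f y (b j) - D j| <= e) ->
  forall js q c s, `|q - p| + `|s| * \sum_(j <- js) `|c j| < r ->
  `|f (q + s *: \sum_(j <- js) c j *: b j) - f q - s * \sum_(j <- js) c j * D j|
     <= e * (`|s| * \sum_(j <- js) `|c j|).
Proof.
move=> b1 Hd js; elim: js => [|j js IH] q c s H.
  by rewrite !big_nil scaler0 addr0 mulr0 subrr subr0 normr0 mulr0 mulr0.
rewrite !big_cons in H *.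
set t := s * c j.
set q' := q + t *: b j.
have Hq' : `|q' - p| <= `|q - p| + `|t|.
  rewrite /q' addrAC; apply: (le_trans (ler_normD _ _)); rewrite lerD2l normrZ.
  by rewrite -[leRHS]mulr1 ler_wpM2l.
have ht : `|t| = `|s| * `|c j| by rewrite normrM.
have H1 : `|q' - p| + `|s| * \sum_(j <- js) `|c j| < r.
  apply: le_lt_trans H; rewrite mulrDr addrA lerD2r.
  by apply: (le_trans Hq'); rewrite ht.
have IH1 := IH q' c s H1.
have S : `|f q' - f q - D j * t| <= e * `|t|.
  have := @seg_any (fun u : R => f (q + u *: b j)) 0 t (D j) e.
  rewrite scale0r addr0 subr0; apply => u uH.
  have Hu : `|q + u *: b j - p| < r.
    rewrite addrAC; apply: le_lt_trans (ler_normD _ _) _; rewrite normrZ.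
    apply: (le_lt_trans _ H); rewrite lerD2l mulrDr.
    apply: (le_trans (y := `|s| * `|c j|)); last first.
      by rewrite lerDl mulr_ge0 // sumr_ge0.
    rewrite -ht; apply: (le_trans (y := `|u|)); first by rewrite -[leRHS]mulr1 ler_wpM2l.
    move: uH; case: (leP 0 t) => t0 /andP[u0 ut].
      by rewrite !ger0_norm // (le_trans u0 ut).
    by rewrite (ler0_norm ut) (ler0_norm (ltW t0)) lerN2.
  have [dv dd] := @line_derive f q (b j) u (proj1 (Hd j _ Hu)).
  by split => //; rewrite dd; exact: (proj2 (Hd j _ Hu)).
have -> : q + s *: (c j *: b j + \sum_(j0 <- js) c j0 *: b j0) = q' + s *: \sum_(j0 <- js) c j0 *: b j0.
  by rewrite /q' scalerDr scalerA addrA.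
have -> : f (q' + s *: \sum_(j0 <- js) c j0 *: b j0) - f q - s * (c j * D j + \sum_(j0 <- js) c j0 * D j0)
   = (f (q' + s *: \sum_(j0 <- js) c j0 *: b j0) - f q' - s * \sum_(j0 <- js) c j0 * D j0)
     + (f q' - f q - D j * t).
  by rewrite /t; ring.
apply: (le_trans (ler_normD _ _)).
rewrite mulrDr mulrDr [X in _ <= X]addrC -ht; exact: lerD.
Qed.

Lemma near_ball (p : X) (P : X -> Prop) :
  (\forall y \near p, P y) -> exists2 r : R, 0 < r & forall y, `|y - p| < r -> P y.
Proof.
move=> /nbhs_normP [r r0 H]; exists r => // y yp; apply: H.
by rewrite /ball_ /= distrC.
Qed.

Lemma key (f : X -> R) (p : X) (m : nat) (b : 'I_m -> X) (r0 : R) :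
  0 < r0 -> (forall j, `|b j| <= 1) ->
  (forall j y, `|y - p| < r0 -> derivable f y (b j)) ->
  (forall j, {for p, continuous (fun y => derive f y (b j))}) ->
  forall e, 0 < e -> exists2 r, 0 < r & forall q c s,
    `|q - p| + `|s| * \sum_(j < m) `|c j| < r ->
    `|f (q + s *: \sum_(j < m) c j *: b j) - f q - s * \sum_(j < m) c j * derive f p (b j)|
      <= e * (`|s| * \sum_(j < m) `|c j|).
Proof.
move=> r00 b1 Hd Hc e e0.
have : \forall y \near p, forall j, `|derive f y (b j) - derive f p (b j)| <= e.
  apply: filter_forall => j.
  apply: (filterS _ ((cvgrPdist_le _ _).1 (Hc j) e e0)) => y /=.
  by rewrite distrC.
move=> /near_ball [r1 r10 H1].
exists (Num.min r0 r1); first by rewrite lt_min r00 r10.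
move=> q c s H; apply: (@key_core f p _ b (fun j => derive f p (b j)) (Num.min r0 r1)) => //.
move=> j y; rewrite lt_min => /andP[y0 y1]; split; first exact: Hd.
exact: H1.
Qed.
End L1.
Section L2.
Variable R : realType.

Lemma entry_le (k : nat) (M : 'rV[R]_k) i : `|M 0 i| <= `|M|.
Proof.
rewrite [leRHS]/Num.Def.normr/= mx_normrE.
by apply: le_trans; last exact: (le_bigmax _ _ (0, i)).
Qed.

Lemma norm_le_entries (k : nat) (M : 'rV[R]_k) c :
  0 <= c -> (forall i, `|M 0 i| <= c) -> `|M| <= c.
Proof.
move=> c0 H; rewrite /Num.Def.normr/= mx_normrE (bigmax_le _ c0)//= => -[i j] _.
by rewrite (ord1 i); exact: H.
Qed.

Lemma norm_e (k : nat) (j : 'I_k) : `|('e_j : 'rV[R]_k)| <= 1.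
Proof.
apply: norm_le_entries => // i; rewrite mxE.
by case: (_ && _); rewrite ?normr1 ?normr0.
Qed.

Lemma term_le_sum (I : finType) (F : I -> R) i :
  (forall j, 0 <= F j) -> F i <= \sum_j F j.
Proof.
move=> F0; rewrite (bigD1 i) //= lerDl; apply: sumr_ge0 => j _; exact: F0.
Qed.

Lemma pair_sum (U W : lmodType R) (k : nat) (c : 'I_k -> R) (w : 'I_k -> W) :
  \sum_(j < k) c j *: ((0 : U), w j) = (0, \sum_(j < k) c j *: w j).
Proof.
elim/big_rec2: _ => [//|j x y _ ->].
by apply: injective_projections => /=; rewrite ?scaler0 ?addr0.
Qed.

Lemma min4 (a b c d : R) : 0 < a -> 0 < b -> 0 < c -> 0 < d ->
  exists r, [/\ 0 < r, r <= a, r <= b, r <= c & r <= d].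
Proof.
move=> a0 b0 c0 d0; exists (Num.min a (Num.min b (Num.min c d))).
by split; rewrite ?lt_min ?a0 ?b0 ?c0 ?d0 // !ge_min ?lexx ?orbT.
Qed.
End L2.
Section L3.
Variable R : realType.
Variable X : normedModType R.

Lemma key_vec (k : nat) (f : X -> 'rV[R]_k) (p : X) (m : nat) (b : 'I_m -> X) (r0 : R) :
  0 < r0 -> (forall j, `|b j| <= 1) ->
  (forall j y, `|y - p| < r0 -> derivable f y (b j)) ->
  (forall j, {for p, continuous (fun y => derive f y (b j))}) ->
  forall e, 0 < e -> exists2 r, 0 < r & forall q c s,
    `|q - p| + `|s| * \sum_(j < m) `|c j| < r -> forall i,
    `|f (q + s *: \sum_(j < m) c j *: b j) 0 i - f q 0 i
        - s * \sum_(j < m) c j * (derive f p (b j)) 0 i|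
      <= e * (`|s| * \sum_(j < m) `|c j|).
Proof.
move=> r00 b1 Hd Hc e e0.
have : \forall y \near p, forall j, `|derive f y (b j) - derive f p (b j)| <= e.
  apply: filter_forall => j.
  apply: (filterS _ ((cvgrPdist_le _ _).1 (Hc j) e e0)) => y /=.
  by rewrite distrC.
move=> /near_ball [r1 r10 H1].
exists (Num.min r0 r1); first by rewrite lt_min r00 r10.
move=> q c s H i.
apply: (@key_core R X (fun y => f y 0 i) p _ b (fun j => (derive f p (b j)) 0 i) (Num.min r0 r1)) => //.
move=> j y; rewrite lt_min => /andP[y0 y1].
have dj := Hd j y y0.
split; first exact: ((derivable_mxP _ _ _).1 dj 0 i).
have E : derive (fun t => f t 0 i) y (b j) = (derive f y (b j)) 0 i.
  by rewrite (derive_mx dj) mxE.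
rewrite E; apply: le_trans (H1 y y1 j).
by have := @entry_le R k (derive f y (b j) - derive f p (b j)) i; rewrite !mxE.
Qed.
End L3.

Section L4.
Variable R : realType.
Variable n : nat.
Local Notation V := 'rV[R]_n.

Lemma CH (F : V -> R) (a0 : V) (B : R) :
  0 <= B ->
  (forall z v, derivable F z v) -> (forall v, continuous (fun z => derive F z v)) ->
  forall e : R, 0 < e -> exists2 rho : R, 0 < rho & forall (a w w0 : V) (s : R),
    `|a - a0| < rho -> (forall i, `|w0 0 i| <= B) -> (forall i, `|w 0 i - w0 0 i| < rho) ->
    0 < s < rho ->
    `|F (a + s *: w) - F a - s * \sum_(i < n) w0 0 i * derive F a0 'e_i| <= e * s.
Proof.
move=> B0 Hd Hc e e0.
set D := fun i : 'I_n => derive F a0 'e_i.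
set Dsum := \sum_(i < n) `|D i|.
set Ws := n%:R * (B + 1).
have Ds0 : 0 <= Dsum by apply: sumr_ge0.
have Ws0 : 0 <= Ws by apply: mulr_ge0 => //; lra.
have e20 : 0 < e / (2 * (Ws + 1)) by apply: divr_gt0 => //; lra.
have [r2 r20 Hk] := @key R V F a0 n (fun i => 'e_i) 1 ltr01 (fun j => @norm_e R n j)
   (fun j y _ => Hd y _) (fun j => Hc _ a0) _ e20.
have [rho [rho0 rho1 rho2 rho3 rho4]] := @min4 R 1 (r2/2) (r2 / (2*(Ws+1))) (e / (2*(Dsum+1)))
   ltr01 (ltac:(apply: divr_gt0 => //; lra)) (ltac:(apply: divr_gt0 => //; lra))
   (ltac:(apply: divr_gt0 => //; lra)).
exists rho => // a w w0 s Ha Hw0 Hw /andP[s0 srho].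
have rho3' : rho * (2 * (Ws + 1)) <= r2 by rewrite -ler_pdivlMr //; lra.
have rho4' : rho * (2 * (Dsum + 1)) <= e by rewrite -ler_pdivlMr //; lra.
have sumw : \sum_(i < n) `|w 0 i| <= Ws.
  apply: (le_trans (y := \sum_(i < n) (B + 1))).
    apply: ler_sum => i _.
    have := Hw i; have := Hw0 i.
    have := ler_normD (w0 0 i) (w 0 i - w0 0 i); rewrite addrC subrK.
    move=> h1 h2 h3; lra.
  by rewrite sumr_const card_ord /Ws mulr_natl.
have sw0 : 0 <= \sum_(i < n) `|w 0 i| by apply: sumr_ge0.
have wsum := row_sum_delta w.
have Hq : `|a - a0| + `|s| * \sum_(i < n) `|w 0 i| < r2.
  rewrite gtr0_norm //.
  have : s * \sum_(i < n) `|w 0 i| <= s * Ws by apply: ler_wpM2l => //; lra.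
  nra.
have K := Hk a (fun i => w 0 i) s Hq.
rewrite -wsum (gtr0_norm s0) in K.
have E : F (a + s *: w) - F a - s * \sum_(i < n) w0 0 i * D i =
   (F (a + s *: w) - F a - s * \sum_(i < n) w 0 i * D i) +
   s * \sum_(i < n) (w 0 i - w0 0 i) * D i.
  idtac.
  have -> : \sum_(i < n) (w 0 i - w0 0 i) * D i = \sum_(i < n) w 0 i * D i - \sum_(i < n) w0 0 i * D i.
    by rewrite -sumrB; apply: eq_bigr => i _; ring.
  ring.
rewrite /D in E; rewrite E.
apply: (le_trans (ler_normD _ _)).
have S2 : `|s * \sum_(i < n) (w 0 i - w0 0 i) * D i| <= s * (rho * Dsum).
  rewrite normrM gtr0_norm // ler_wpM2l //; first lra.
  apply: (le_trans (ler_norm_sum _ _ _)).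
  rewrite /Dsum mulr_sumr; apply: ler_sum => i _.
  rewrite normrM ler_wpM2r //; exact: ltW.
have S1 : e / (2 * (Ws + 1)) * (s * \sum_(i < n) `|w 0 i|) <= e * s / 2.
  set c := e / (2 * (Ws + 1)).
  have ce : c * (2 * (Ws + 1)) = e by rewrite /c divfK //; lra.
  have c0 : 0 <= c by rewrite /c; apply: ltW.
  have h1 : s * \sum_(i < n) `|w 0 i| <= s * Ws by apply: ler_wpM2l => //; lra.
  have h2 : c * (s * \sum_(i < n) `|w 0 i|) <= c * (s * Ws) by apply: ler_wpM2l.
  rewrite -ce.
  have h3 : c * (s * Ws) <= c * (s * (Ws + 1)) by apply: ler_wpM2l => //; nra.
  lra.
have S2' : s * (rho * Dsum) <= e * s / 2.
  have : rho * Dsum <= e / 2.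
    have h : rho * (2 * (Dsum + 1)) = 2 * (rho * Dsum) + 2 * rho by ring.
    lra.
  have h : s * (rho * Dsum) <= s * (e / 2) by apply: ler_wpM2l => //; lra.
  lra.
rewrite /D in S2.
have := lerD K S2.
lra.
Qed.

Lemma U (F : V -> R) (G : V * V -> V) (x0 : V) (rW Bv : R) :
  0 < rW -> 0 <= Bv ->
  (forall z v, derivable F z v) -> (forall v, continuous (fun z => derive F z v)) ->
  (forall y v, `|y - (x0, 0)| < rW -> derivable G y v) ->
  (forall v, {for (x0, 0), continuous (fun y => derive G y v)}) ->
  {for (x0, 0), continuous G} ->
  forall e : R, 0 < e -> exists A : V -> R, exists2 r : R, 0 < r &
    forall (x v : V) (s : R), `|x - x0| < r -> (forall j, `|v 0 j| <= Bv) -> 0 < s < r ->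
    `|F (G (x, s *: v)) - F (G (x, 0)) - s * A v| <= e * s.
Proof.
move=> rW0 Bv0 HdF HcF HdG HcDG HcG e e0.
set p : V * V := (x0, 0).
set DG := fun j : 'I_n => derive G p ((0 : V), 'e_j).
set w0 := fun v : V => \row_(i < n) \sum_(j < n) v 0 j * DG j 0 i.
set Bw := Bv * \sum_(i < n) \sum_(j < n) `|DG j 0 i|.
have Bw0 : 0 <= Bw by apply: mulr_ge0 => //; apply: sumr_ge0 => i _; apply: sumr_ge0.
have [rho rho0 Hch] := @CH F (G p) Bw Bw0 HdF HcF e e0.
have nB0 : 0 <= n%:R * Bv by apply: mulr_ge0.
set e1 := rho / (2 * (n%:R * Bv + 1)).
have e10 : 0 < e1 by apply: divr_gt0 => //; lra.
have b1 : forall j : 'I_n, `|((0 : V), ('e_j : V))| <= 1.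
  by move=> j; rewrite prod_normE /= normr0 ge_max ler01 norm_e.
have [r1 r10 Hk] := @key_vec R _ n G p n (fun j => ((0 : V), 'e_j)) rW rW0 b1
   (fun j y Hy => HdG y _ Hy) (fun j => HcDG _) e1 e10.
have [r3 r30 H3] : exists2 r3 : R, 0 < r3 & forall y, `|y - p| < r3 -> `|G y - G p| < rho.
  have H0 : \forall y \near p, `|G p - G y| < rho by move/cvgrPdist_lt: HcG; apply.
  move: H0 => /near_ball [r3 r30 H]; exists r3 => // y /H; by rewrite distrC.
have [r [r0 ra rb rc rd]] := @min4 R (r1/2) r3 rho (r1/(2*(n%:R * Bv+1)))
   (ltac:(apply: divr_gt0 => //; lra)) r30 rho0 (ltac:(apply: divr_gt0 => //; lra)).
exists (fun v => \sum_(i < n) w0 v 0 i * derive F (G p) 'e_i), r => //.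
move=> x v s Hx Hv /andP[s0 sr].
have Ex : `|(x, (0 : V)) - p| = `|x - x0|.
  rewrite prod_normE /= subrr normr0.
  by apply/max_idPl.
have sumv : \sum_(j < n) `|v 0 j| <= n%:R * Bv.
  apply: (le_trans (y := \sum_(j < n) Bv)); first by apply: ler_sum => j _; exact: Hv.
  by rewrite sumr_const card_ord mulr_natl.
have sv0 : 0 <= \sum_(j < n) `|v 0 j| by apply: sumr_ge0.
have rd' : r * (2 * (n%:R * Bv + 1)) <= r1 by rewrite -ler_pdivlMr //; lra.
have Hq : `|(x, (0 : V)) - p| + `|s| * \sum_(j < n) `|v 0 j| < r1.
  rewrite Ex gtr0_norm //.
  have h1 : s * \sum_(j < n) `|v 0 j| <= s * (n%:R * Bv) by apply: ler_wpM2l => //; lra.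
  have h2 : s * (n%:R * Bv) <= r * (n%:R * Bv) by apply: ler_wpM2r => //; lra.
  have h3 : r * (2 * (n%:R * Bv + 1)) = 2 * (r * (n%:R * Bv)) + 2 * r by ring.
  lra.
have K := Hk _ (fun j => v 0 j) s Hq.
have Ep : (x, (0 : V)) + s *: \sum_(j < n) v 0 j *: ((0 : V), ('e_j : V)) = (x, s *: v).
  rewrite (@pair_sum R V V n (fun j => v 0 j) (fun j => 'e_j)) -row_sum_delta.
  by apply: injective_projections => /=; rewrite ?scaler0 ?addr0 ?add0r.
rewrite Ep in K.
set a := G (x, 0).
set bb := G (x, s *: v).
set w := s^-1 *: (bb - a).
have Ebb : bb = a + s *: w.
  by rewrite /w scalerA divff ?gt_eqF // scale1r addrC subrK.
rewrite -/a Ebb.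
apply: Hch.
- apply: H3; rewrite Ex; lra.
- move=> i; rewrite mxE.
  apply: (le_trans (ler_norm_sum _ _ _)).
  apply: (le_trans (y := \sum_(j < n) Bv * `|DG j 0 i|)).
    apply: ler_sum => j _; rewrite normrM; apply: ler_wpM2r => //.
  rewrite /Bw -mulr_sumr; apply: ler_wpM2l => //.
  by apply: (@term_le_sum R _ (fun i => \sum_(j < n) `|DG j 0 i|)) => k; apply: sumr_ge0.
- move=> i; have Ki := K i.
  rewrite /w !mxE.
  have -> : s^-1 * (bb 0 i - a 0 i) - \sum_(j < n) v 0 j * DG j 0 i =
       s^-1 * (bb 0 i - a 0 i - s * \sum_(j < n) v 0 j * ('D_(0, 'e_j) G p) 0 i).
    by rewrite [RHS]mulrBr mulrA mulVf ?gt_eqF // mul1r.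
  rewrite normrM gtr0_norm ?invr_gt0 //.
  rewrite -/a -/bb in Ki.
  apply: (le_lt_trans (y := s^-1 * (e1 * (`|s| * \sum_(j < n) `|v 0 j|)))).
    by apply: ler_wpM2l => //; rewrite invr_ge0; exact: ltW.
  rewrite gtr0_norm // mulrCA mulKf ?gt_eqF //.
  have h1 : e1 * \sum_(j < n) `|v 0 j| <= e1 * (n%:R * Bv) by apply: ler_wpM2l => //; exact: ltW.
  have h2 : e1 * (2 * (n%:R * Bv + 1)) = rho by rewrite /e1 divfK //; lra.
  have h3 : e1 * (2 * (n%:R * Bv + 1)) = 2 * (e1 * (n%:R * Bv)) + 2 * e1 by ring.
  lra.
- by rewrite s0; lra.
Qed.

Lemma dn (P : R -> Prop) : (\forall h \near 0^', P h) ->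
  exists2 r : R, 0 < r & forall h, 0 < h < r -> P h.
Proof.
move=> H.
have H' : \forall h \near (0:R), h != 0 -> P h.
  rewrite /dnbhs /within in H; exact: H.
have [r r0 Hr] := @near_ball R R 0 _ H'.
exists r => // h /andP[h0 hr]; apply: Hr; last by rewrite gt_eqF.
by rewrite subr0 gtr0_norm.
Qed.

Lemma Pexp (F : V -> R) (Rx : V -> V) (x v : V) :
  (forall z v, derivable F z v) -> (forall v, continuous (fun z => derive F z v)) ->
  derivable (fun t : R => Rx (t *: v)) 0 1 ->
  derive (fun t : R => Rx (t *: v)) 0 1 = v -> Rx 0 = x ->
  forall e : R, 0 < e -> forall rr : R, 0 < rr -> exists s : R, 0 < s < rr /\
    `|F (Rx (s *: v)) - F x - s * \sum_(i < n) v 0 i * derive F x 'e_i| <= e * s.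
Proof.
move=> HdF HcF Hd Hdv Rx0 e e0 rr rr0.
set B := \sum_(i < n) `|v 0 i|.
have B0 : 0 <= B by apply: sumr_ge0.
have [rho rho0 Hch] := @CH F x B B0 HdF HcF e e0.
have Hc := Hd; rewrite /derivable in Hc.
move: Hc => /cvg_ex [l Hl].
have El : l = v.
  by rewrite -Hdv /derive; apply/esym/cvg_lim => //.
rewrite El in Hl.
have H1 : \forall h \near 0^', `|v - h^-1 *: (((fun t : R => Rx (t *: v)) \o shift 0) (h *: 1) - Rx (0 *: v))| < rho.
  by move/cvgrPdist_lt: Hl; apply.
have [d d0 Hdd] := dn _ H1.
have [s [s0 sd srho srr _]] := @min4 R d rho rr 1 d0 rho0 rr0 ltr01.
set s' := s / 2.
have s'0 : 0 < s' by rewrite /s'; lra.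
exists s'; split; first by apply/andP; split; rewrite /s'; lra.
have Hs := Hdd s' (ltac:(apply/andP; split; rewrite /s'; lra)).
rewrite /= scale0r Rx0 in Hs.
have E1 : (s' *: (1 : R) + 0) *: v = s' *: v by rewrite addr0 [s' *: 1]mulr1.
rewrite E1 in Hs.
set u := s'^-1 *: (Rx (s' *: v) - x).
have Eu : Rx (s' *: v) = x + s' *: u.
  by rewrite /u scalerA divff ?gt_eqF // scale1r addrC subrK.
rewrite Eu; apply: Hch.
- by rewrite subrr normr0.
- move=> i; exact: (@term_le_sum R _ (fun i => `|v 0 i|)).
- move=> i; apply: (le_lt_trans (y := `|u - v|)).
    by have := @entry_le R n (u - v) i; rewrite !mxE.
  by rewrite distrC.
- by apply/andP; split; rewrite /s'; lra.
Qed.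
End L4.
Section L5.
Variable R : realType.
Variable n : nat.
Local Notation V := 'rV[R]_n.

Lemma T0 (M : set V) x : M x -> tangent M x 0.
Proof.
move=> Mx; exists (cst x), 1; split => //; exact: derive_cst.
Qed.

Lemma Tscale (M : set V) x v c : tangent M x v -> tangent M x (c *: v).
Proof.
move=> [g [e [e0 Hg g0 Hd Hdv]]].
set h := fun t : R => g (c * t).
have E : (fun h' : R => h'^-1 *: ((h \o shift 0) (h' *: 1) - h 0)) =
         (fun h' : R => h'^-1 *: ((g \o shift 0) (h' *: c) - g 0)).
  apply/funext => h' /=; rewrite /h mulr0 addr0 [h' *: 1]mulr1.
  by rewrite addr0 [h' *: c]/(h' * c) mulrC.
have dg : differentiable g 0 := (derivable1_diffP g 0).1 Hd.
have dc : derivable g 0 c := diff_derivable dg.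
exists h, (e / (`|c| + 1)); split.
- by apply: divr_gt0 => //; apply: ltr_pwDr.
- move=> t te; apply: Hg; rewrite normrM.
  have c1 : 0 < `|c| + 1 by apply: ltr_pwDr.
  rewrite ltr_pdivlMr // in te.
  apply: le_lt_trans te; rewrite mulrC ler_wpM2l //; lra.
- by rewrite /h mulr0.
- by rewrite /derivable E.
- rewrite /derive E -/(derive g 0 c) (deriveE _ dg) -Hdv (deriveE _ dg).
  have -> : 'd g 0 c = 'd g 0 (c *: (1:R)) by rewrite [c *: 1]mulr1.
  by rewrite linearZ.
Qed.

Lemma Tproj (M : set V) x g : M x ->
  orth_proj (tangent M x) g = 0 \/
  (tangent M x (orth_proj (tangent M x) g) /\
   forall w, tangent M x w -> dotv (g - orth_proj (tangent M x) g) w = 0).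
Proof.
move=> Mx; rewrite /orth_proj.
case: (pselect (exists p, [set p | tangent M x p /\ forall w, tangent M x w -> dotv (g - p) w = 0] p)).
  by move=> /(xgetPex 0) H; right.
by move=> H; left; apply: xgetPN => p Hp; apply: H; exists p.
Qed.

Lemma Tin (M : set V) x g : M x -> tangent M x (orth_proj (tangent M x) g).
Proof.
by move=> Mx; case: (@Tproj M x g Mx) => [->|[]//]; exact: T0.
Qed.
End L5.

Lemma fin_bound (K : set nat) : finite_set K -> exists N, forall l, (N <= l)%N -> ~ K l.
Proof.
move=> Kf; exists (\max_(i <- finmap.enum_fset (fset_set K)) i).+1 => l Hl Kl.
have H0 := in_fset_set Kf l.
have Kl' : l \in K by rewrite inE.
rewrite Kl' in H0.
have : l \in finmap.enum_fset (fset_set K) := H0.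
move=> Hin; have H := @leq_bigmax_seq _ _ xpredT (fun i => i) l Hin isT.
by move: (leq_trans Hl H); rewrite ltnn.
Qed.

Lemma inf_unbounded (K : set nat) : infinite_set K -> forall N, exists l, (N <= l)%N /\ K l.
Proof.
move=> Ki N; apply: contrapT => H; apply: Ki.
apply: (sub_finite_set (B := `I_N)); last exact: finite_II.
move=> l Kl; rewrite /= ltnNge; apply/negP => Hl; apply: H; by exists l.
Qed.

Lemma decay (R : realType) (d : nat -> R) (K : set nat) (th : R) : 0 < th < 1 ->
  (forall l, 0 < d l) -> (forall l, K l -> d l.+1 = th * d l) ->
  (forall l, ~ K l -> d l.+1 = d l) -> infinite_set K ->
  forall e : R, 0 < e -> exists N : nat, forall l, (N <= l)%N -> `|d l| < e.
Proof.
move=> /andP[th0 th1] dp dK dnK Ki e e0.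
have dle : forall l, d l.+1 <= d l.
  move=> l; case: (pselect (K l)) => Kl; last by rewrite dnK.
  by rewrite dK // ler_piMl //; apply: ltW.
have mono : forall N l, (N <= l)%N -> d l <= d N.
  move=> N l /subnK <-; elim: (l - N)%N => [|k IH]; first by rewrite add0n.
  by rewrite addSn; apply: le_trans (dle _) IH.
have claim : forall k : nat, exists N, d N <= th ^+ k * d 0%N.
  elim=> [|k [N HN]]; first by exists 0%N; rewrite expr0 mul1r.
  have [l [Nl Kl]] := @inf_unbounded K Ki N.
  exists l.+1; rewrite dK // exprS -mulrA ler_pM2l //.
  exact: le_trans (mono _ _ Nl) HN.
have G := @cvg_geometric R (d 0%N) th (ltac:(by rewrite gtr0_norm)).
have : \forall k \near \oo, `|0 - geometric (d 0%N) th k| < e by move/cvgrPdist_lt: G; apply.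
move=> [k0 _ Hk0].
have [N HN] := claim k0.
exists N => l Nl; rewrite gtr0_norm //.
apply: le_lt_trans (mono _ _ Nl) _; apply: le_lt_trans HN _.
have := Hk0 k0 (leqnn k0); rewrite /= sub0r normrN /geometric /=.
by rewrite gtr0_norm ?mulr_gt0 ?exprn_gt0 // mulrC.
Qed.

Section L6.
Variable R : realType.
Variable n : nat.
Local Notation V := 'rV[R]_n.

Lemma dotvDl (a b c : V) : dotv (a + b) c = dotv a c + dotv b c.
Proof. by rewrite /dotv -big_split; apply: eq_bigr => i _; rewrite mxE mulrDl. Qed.

Lemma dotvNl (a c : V) : dotv (- a) c = - dotv a c.
Proof. by rewrite /dotv -sumrN; apply: eq_bigr => i _; rewrite mxE mulNr. Qed.

Lemma dotvC (a b : V) : dotv a b = dotv b a.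
Proof. by rewrite /dotv; apply: eq_bigr => i _; rewrite mulrC. Qed.

Lemma dotvBl (a b c : V) : dotv (a - b) c = dotv a c - dotv b c.
Proof. by rewrite dotvDl dotvNl. Qed.

Lemma dotv_ge0 (a : V) : 0 <= dotv a a.
Proof. by apply: sumr_ge0 => i _; rewrite -expr2 sqr_ge0. Qed.

Lemma dotv_entry (a : V) i : a 0 i ^+ 2 <= dotv a a.
Proof.
rewrite /dotv expr2; apply: (@term_le_sum R _ (fun i => a 0 i * a 0 i)).
by move=> j; rewrite -expr2 sqr_ge0.
Qed.

Lemma enormE (a : V) : enorm a ^+ 2 = dotv a a.
Proof. by rewrite /enorm sqr_sqrtr // dotv_ge0. Qed.

Lemma enormN (a : V) : enorm (- a) = enorm a.
Proof. by rewrite /enorm dotvNl dotvC dotvNl opprK. Qed.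

Lemma clus (u : nat -> V) (L : set V) (N : nat) : compact L ->
  (forall l, (N <= l)%N -> L (u l)) ->
  exists2 xs, L xs & forall rho : R, 0 < rho -> forall N', exists l, (N' <= l)%N /\ `|u l - xs| < rho.
Proof.
move=> cL HL.
have FL : (u @ \oo) L by exists N => // l /= Hl; exact: HL.
have [xs [Lxs cxs]] := cL _ _ FL.
exists xs => // rho rho0 N'.
have FA : (u @ \oo) (u @` [set l | (N' <= l)%N]) by exists N' => // l /= Hl; exists l.
have NB : nbhs xs [set y | `|y - xs| < rho].
  rewrite -nbhs_nbhs_norm; exists rho => // y /=; by rewrite distrC.
have [y [[l /= Hl <-] Hy]] := cxs _ _ FA NB.
by exists l.
Qed.

Lemma Fcont (F : V -> R) (a0 : V) :
  (forall z v, derivable F z v) -> (forall v, continuous (fun z => derive F z v)) ->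
  forall e : R, 0 < e -> exists2 r : R, 0 < r & forall y, `|y - a0| < r -> `|F y - F a0| < e.
Proof.
move=> HdF HcF e e0.
have [rho rho0 Hch] := @CH R n F a0 0 (lexx 0) HdF HcF 1 ltr01.
have [s [s0 s1 s2 _ _]] := @min4 R (rho / 2) (e / 2) 1 1 (ltac:(apply: divr_gt0 => //; lra))
   (ltac:(apply: divr_gt0 => //; lra)) ltr01 ltr01.
exists (rho * s); first exact: mulr_gt0.
move=> y Hy.
set w := s^-1 *: (y - a0).
have Ey : y = a0 + s *: w by rewrite /w scalerA divff ?gt_eqF // scale1r addrC subrK.
have := Hch a0 w 0 s.
rewrite subrr normr0 => /(_ rho0).
have H1 : forall i : 'I_n, `|(0 : V) 0 i| <= 0 by move=> i; rewrite mxE normr0.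
move=> /(_ H1).
have H2 : forall i : 'I_n, `|w 0 i - (0 : V) 0 i| < rho.
  move=> i; rewrite [(0 : V) 0 i]mxE subr0 /w mxE normrM gtr0_norm ?invr_gt0 //.
  apply: (le_lt_trans (y := s^-1 * `|y - a0|)).
    by apply: ler_wpM2l; [rewrite invr_ge0; exact: ltW | exact: entry_le].
  by rewrite mulrC ltr_pdivrMr // mulrC.
move=> /(_ H2).
have H3 : 0 < s < rho by rewrite s0 /=; lra.
move=> /(_ H3).
have -> : \sum_(i < n) (0 : V) 0 i * 'D_'e_i F a0 = 0.
  by rewrite big1 // => i _; rewrite mxE mul0r.
rewrite mulr0 subr0 mul1r -Ey => H; lra.
Qed.
End L6.

Lemma arith (R : realType) (Fx FRs FRs' s s' A D ef sigma d2 : R) :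
  0 < s -> 0 < s' -> sigma < 1 -> d2 < D -> 3 * ef = (1 - sigma) * d2 ->
  `|FRs' - Fx - s' * - D| <= ef * s' -> `|FRs' - Fx - s' * A| <= ef * s' ->
  `|FRs - Fx - s * A| <= ef * s -> Fx - sigma * s * D < FRs -> False.
Proof.
move=> s0 s'0 s1 dD e3; rewrite !ler_norml => /andP[p1 p2] /andP[u1 u2] /andP[v1 v2] fl.
have hA : A + D - 2 * ef <= 0.
  have : s' * (A + D - 2 * ef) <= 0 by nra.
  by rewrite pmulr_rle0.
have h5 : s * (A + D - 2 * ef) <= 0 by nra.
have h6 : s * ((1 - sigma) * D - 3 * ef) < 0 by nra.
have h7 : (1 - sigma) * D - 3 * ef < 0 by rewrite pmulr_rlt0 in h6.
nra.
Qed.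

Theorem proposition4p1 (R : realType) (n : nat) (M : set 'rV[R]_n)
  (f : 'rV[R]_n -> R) (ft : 'rV[R]_n -> R -> R) (Rt : 'rV[R]_n -> 'rV[R]_n -> 'rV[R]_n)
  (x0 : 'rV[R]_n) (delta0 mu0 beta abar th_delta th_mu sigma : R)
  (x : nat -> 'rV[R]_n) (mu delta : nat -> R) :
  embedded_submanifold M -> complete_manifold M ->
  lsc_fun f -> smoothing_function f ft -> retraction M Rt ->
  (forall mub xb, 0 < mub -> M xb ->
     compact [set z | M z /\ ft z mub <= ft xb mub]) ->
  M x0 -> 0 < delta0 -> 0 < mu0 -> 0 < beta < 1 -> 0 < abar ->
  0 < th_delta < 1 -> 0 < th_mu < 1 -> 0 < sigma < 1 ->
  RSSD M ft Rt x0 0 delta0 0 mu0 beta abar th_delta th_mu sigma x mu delta ->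
  let K := [set l : nat | enorm (- rgrad M ft (x l) (mu l)) <= delta l] in
  [/\ infinite_set K,
      (forall e : R, 0 < e -> exists N : nat, forall l, (N <= l)%N -> K l -> `|delta l| < e) &
      (forall e : R, 0 < e -> exists N : nat, forall l, (N <= l)%N -> K l -> `|mu l| < e)].
Proof.
move=> Hemb Hcomp Hlsc [Hft1 _] [Rt_in Rt_sm Rt0 Rt_d] Hcpt Mx0 d0 m0
  /andP[b0 b1] ab0 /andP[td0 td1] /andP[tm0 tm1] /andP[s0 s1] [x00 mu00 d00 Hst] K.
pose AR l k := ft (Rt (x l) ((beta ^+ k * abar) *: - rgrad M ft (x l) (mu l))) (mu l) <=
                ft (x l) (mu l) - sigma * (beta ^+ k * abar) *
                  enorm (rgrad M ft (x l) (mu l)) ^+ 2.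
have step : forall l, (K l /\ [/\ mu l.+1 = th_mu * mu l, delta l.+1 = th_delta * delta l & x l.+1 = x l]) \/
   (~ K l /\ [/\ mu l.+1 = mu l, delta l.+1 = delta l & exists m : nat,
     [/\ AR l m, (forall k, (k < m)%N -> ~ AR l k) &
         x l.+1 = Rt (x l) ((beta ^+ m * abar) *: - rgrad M ft (x l) (mu l))]]).
  move=> l; have [_ H] := Hst l; move: H => /=.
  case: ifP => Hk H; [left|right]; split => //.
  by rewrite /K /= Hk.
have pos : forall l, 0 < mu l /\ 0 < delta l.
  elim => [|l [IHm IHd]]; first by rewrite mu00 d00.
  by case: (step l) => [[_ [-> -> _]]|[_ [-> -> _]]]; split => //; apply: mulr_gt0.
have etaT : forall y mu', M y -> forall c, tangent M y (c *: - rgrad M ft y mu').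
  move=> y mu' My c; rewrite -scaleN1r scalerA; apply: Tscale; exact: Tin.
have Mx : forall l, M (x l).
  elim => [|l IH]; first by rewrite x00.
  case: (step l) => [[_ [_ _ ->]]//|[_ [_ _ [m [_ _ ->]]]]].
  by apply: Rt_in; split => //=; exact: etaT.
have Kinf : infinite_set K.
  move=> /fin_bound [N HN].
  have [mu0' dl0] := pos N.
  set mu' := mu N in mu0' *.
  set dl := delta N in dl0 *.
  have const : forall l, (N <= l)%N -> mu l = mu' /\ delta l = dl.
    move=> l /subnK <-; elim: (l - N)%N => [|k [IHm IHd]]; first by rewrite add0n.
    rewrite addSn; case: (step (k + N)%N) => [[Kk _]|[_ [-> -> _]]] //.
    by exfalso; apply: (HN _ _ Kk); exact: leq_addl.
  pose F := fun z => ft z mu'.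
  have [HdF0 HcF0] := Hft1 mu' mu0'.
  have HdF : forall z v, derivable F z v := fun z v => HdF0 z v I.
  have HcF : forall v, continuous (fun z => derive F z v) := fun v z => HcF0 v z (in_setT z).
  pose g := fun l => rgrad M ft (x l) mu'.
  have bpos : forall k, 0 < beta ^+ k * abar.
    by move=> k; apply: mulr_gt0 => //; apply: exprn_gt0.
  have desc : forall l, (N <= l)%N -> dl < enorm (g l) /\ exists m : nat,
     [/\ F (Rt (x l) ((beta ^+ m * abar) *: - g l)) <= F (x l) - sigma * (beta ^+ m * abar) * enorm (g l) ^+ 2,
         (forall k, (k < m)%N -> ~ (F (Rt (x l) ((beta ^+ k * abar) *: - g l)) <= F (x l) - sigma * (beta ^+ k * abar) * enorm (g l) ^+ 2)) &
         x l.+1 = Rt (x l) ((beta ^+ m * abar) *: - g l)].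
    move=> l Nl; have [cm cd] := const l Nl.
    case: (step l) => [[Kl _]|[nKl [_ _ Hm]]]; first by exfalso; exact: HN _ Nl Kl.
    move: nKl Hm; rewrite /K /AR /= cm cd /g /F => nKl Hm; split => //.
    by rewrite -enormN ltNge; apply/negP.
  have gT : forall l, tangent M (x l) (g l) by move=> l; exact: Tin.
  have orth : forall l, (N <= l)%N ->
     forall w, tangent M (x l) w -> dotv (egrad F (x l) - g l) w = 0.
    move=> l Nl; have [H _] := desc l Nl.
    case: (@Tproj R n M (x l) (egrad F (x l)) (Mx l)) => [E|[_ Ho]//].
    exfalso; move: H; rewrite /g /rgrad E /enorm /dotv big1 ?sqrtr0 => [|i _]; last by rewrite mxE mulr0.
    lra.
  have mono1 : forall l, (N <= l)%N -> F (x l.+1) <= F (x l).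
    move=> l Nl; have [_ [m [Ha _ Hx]]] := desc l Nl.
    rewrite Hx; apply: le_trans Ha _; rewrite lerBlDr lerDl.
    apply: mulr_ge0; last exact: sqr_ge0.
    by apply: mulr_ge0; [lra| exact: ltW].
  have monoN : forall l k, (N <= l)%N -> (l <= k)%N -> F (x k) <= F (x l).
    move=> l k Nl /subnK <-; elim: (k - l)%N => [|j IH]; first by rewrite add0n.
    rewrite addSn; apply: le_trans (mono1 _ _) IH.
    exact: leq_trans Nl (leq_addl _ _).
  have cL := Hcpt mu' (x N) mu0' (Mx N).
  have [xs [Mxs _] clx] := @clus R n x _ N cL (fun l Nl => conj (Mx l) (monoN N l (leqnn N) Nl)).
  have lb : forall l, (N <= l)%N -> F xs <= F (x l).
    move=> l Nl; rewrite leNgt; apply/negP => Hlt.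
    have [r r0 Hr] := @Fcont R n F xs HdF HcF (F xs - F (x l)) (ltac:(lra)).
    have [k [lk Hk]] := clx r r0 l.
    have := Hr _ Hk; have := monoN l k Nl lk.
    move=> h1; rewrite ltr_norml => /andP[h2 _]; lra.
  have [rg rg0 Hrg] : exists2 rg : R, 0 < rg & forall y, `|y - xs| < rg ->
      forall i : 'I_n, `|derive F y 'e_i - derive F xs 'e_i| < 1.
    have : \forall y \near xs, forall i : 'I_n, `|derive F y 'e_i - derive F xs 'e_i| < 1.
      apply: (@filter_forall _ _ (fun i y => `|derive F y ('e_i : 'rV[R]_n) - derive F xs 'e_i| < 1) (nbhs xs) _) => i.
      have H0 : \forall y \near xs, `|derive F xs 'e_i - derive F y 'e_i| < 1.
        by move/cvgrPdist_lt: (HcF 'e_i xs); apply.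
      by apply: filterS H0 => y; rewrite distrC.
    by move/near_ball => [rg rg0 H]; exists rg.
  pose Bg := \sum_(i < n) (`|derive F xs 'e_i| + 1) ^+ 2.
  pose Bv := 1 + Bg.
  have Bg0 : 0 <= Bg by apply: sumr_ge0 => i _; exact: sqr_ge0.
  have Bv0 : 0 <= Bv by rewrite /Bv; lra.
  have Bv1 : 0 < Bv + 1 by lra.
  have gg : forall l, (N <= l)%N -> dotv (egrad F (x l)) (g l) = dotv (g l) (g l).
    move=> l Nl; have := orth l Nl (g l) (gT l); rewrite dotvBl; lra.
  have etab : forall l, (N <= l)%N -> `|x l - xs| < rg -> forall j, `|(- g l) 0 j| <= Bv.
    move=> l Nl Hl j.
    set e := egrad F (x l).
    have h1 : dotv (g l) (g l) <= dotv e e.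
      have E1 : dotv (e - g l) (e - g l) = dotv e (e - g l) - dotv (g l) (e - g l) by rewrite dotvBl.
      have E2 : dotv e (e - g l) = dotv e e - dotv (g l) e by rewrite dotvC dotvBl.
      have E3 : dotv (g l) (e - g l) = 0 by rewrite dotvC; exact: orth.
      have E4 : dotv (g l) e = dotv (g l) (g l) by rewrite dotvC; exact: gg.
      have := @dotv_ge0 R n (e - g l); clear - E1 E2 E3 E4; lra.
    have h2 : dotv e e <= Bg.
      rewrite /dotv /Bg; apply: ler_sum => i _.
      rewrite /e mxE -expr2 -real_normK ?num_real //.
      have := Hrg _ Hl i.
      have := ler_normD (derive F (x l) 'e_i - derive F xs 'e_i) (derive F xs 'e_i).
      rewrite subrK => h3 h4.
      have h5 : 0 <= `|derive F (x l) 'e_i| by [].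
      clear - h3 h4 h5; nra.
    have h3 := @dotv_entry R n (g l) j.
    rewrite mxE normrN /Bv.
    have h4 : `|g l 0 j| ^+ 2 = g l 0 j ^+ 2 by rewrite real_normK ?num_real.
    have h5 : 0 <= `|g l 0 j| by [].
    clear - h1 h2 h3 h4 h5; nra.
  have bund : tangent_bundle M (xs, 0) by split => //=; exact: T0.
  have [W [G [Wo Wp Gs GR]]] := Rt_sm _ bund.
  have [rW rW0 HW] : exists2 rW : R, 0 < rW & forall q, `|q - (xs, 0)| < rW -> W q.
    have NW : nbhs (xs, (0 : 'rV[R]_n)) W.
      have E := open_nbhsE (xs, (0 : 'rV[R]_n)) W.
      have [] : open W /\ nbhs (xs, (0 : 'rV[R]_n)) W by rewrite -E.
      by [].
    by move: NW => /near_ball.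
  have Wp' : (xs, (0 : 'rV[R]_n)) \in W by rewrite inE.
  pose ef := (1 - sigma) * dl ^+ 2 / 3.
  have ef0 : 0 < ef by rewrite /ef; apply: divr_gt0 => //; apply: mulr_gt0; [lra | exact: exprn_gt0].
  have [A [r r0 HU]] := @U R n F G xs rW Bv rW0 Bv0 HdF HcF
      (fun y v Hy => (Gs 1%N).1 y v (HW y Hy)) (fun v => (Gs 1%N).2 v _ Wp') (Gs 0%N _ Wp') ef ef0.
  have rWB0 : 0 < rW / (Bv + 1) by apply: divr_gt0.
  have [rs [rs0 rs1 rs2 rs3 rs4]] := @min4 R r rg rW (rW / (Bv + 1)) r0 rg0 rW0 rWB0.
  have [tau [tau0 tau1 tau2 _ _]] := @min4 R abar (beta * rs) 1 1 ab0 (mulr_gt0 b0 rs0) ltr01 ltr01.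
  have c0 : 0 < sigma * dl ^+ 2 * tau by apply: mulr_gt0 => //; apply: mulr_gt0 => //; exact: exprn_gt0.
  have [rl rl0 Hrl] := @Fcont R n F xs HdF HcF (sigma * dl ^+ 2 * tau) c0.
  have [L [NL HL]] := clx rl rl0 N.
  have FL : F (x L) < F xs + sigma * dl ^+ 2 * tau.
    by have := Hrl _ HL; rewrite ltr_norml => /andP[_ h]; clear - h; lra.
  have [l [Ll Hl]] := clx rs rs0 L.
  have Nl : (N <= l)%N := leq_trans NL Ll.
  have [Hdl [m [Ha Hf Hx]]] := desc l Nl.
  set D := enorm (g l) ^+ 2.
  have HaD : F (Rt (x l) ((beta ^+ m * abar) *: - g l)) <= F (x l) - sigma * (beta ^+ m * abar) * D := Ha.
  have Ddl : dl ^+ 2 < D.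
    rewrite /D !expr2; apply: ltr_pM => //; exact: ltW.
  have tsm : beta ^+ m * abar < tau.
    have h1 := lb l.+1 (leq_trans Nl (leqnSn l)).
    have h2 := monoN L l NL Ll.
    rewrite Hx in h1.
    have h3 : sigma * (beta ^+ m * abar) * dl ^+ 2 < sigma * (beta ^+ m * abar) * D.
      by rewrite ltr_pM2l //; apply: mulr_gt0.
    have h4 : sigma * dl ^+ 2 * (beta ^+ m * abar) < sigma * dl ^+ 2 * tau.
      have -> : sigma * dl ^+ 2 * (beta ^+ m * abar) = sigma * (beta ^+ m * abar) * dl ^+ 2 by ring.
      clear - h1 h2 h3 HaD FL; lra.
    by rewrite ltr_pM2l // in h4; apply: mulr_gt0 => //; exact: exprn_gt0.
  clear HaD; case: m Ha Hf Hx tsm => [|m'] Ha Hf Hx tsm.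
    by rewrite expr0 mul1r in tsm; clear - tsm tau1; lra.
  set s := beta ^+ m' * abar.
  have s0' : 0 < s := bpos m'.
  have ts : beta ^+ m'.+1 * abar = beta * s by rewrite /s exprS mulrA.
  have srs : s < rs.
    rewrite ts in tsm; have : beta * s < beta * rs by clear - tsm tau2; lra.
    by rewrite ltr_pM2l.
  have fail := Hf m' (ltnSn m').
  rewrite -/s in fail.
  have fail' : F (x l) - sigma * s * D < F (Rt (x l) (s *: - g l)) by rewrite ltNge; apply/negP.
  have Gx0 : G (x l, 0) = x l.
    rewrite GR /=; first exact: Rt0.
    - apply: HW; rewrite prod_normE /= subrr normr0 gt_max rW0 andbT.
      exact: lt_le_trans Hl rs3.
    - by split => //=; exact: T0.
  have GxS : forall t : R, 0 < t < rs -> G (x l, t *: - g l) = Rt (x l) (t *: - g l).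
    move=> t /andP[t0 trs]; rewrite GR //.
    - apply: HW; rewrite prod_normE /= subr0 gt_max; apply/andP; split.
        by apply: lt_le_trans Hl _.
      apply: (le_lt_trans (y := t * Bv)).
        rewrite normrZ gtr0_norm //; apply: ler_wpM2l; first exact: ltW.
        by apply: norm_le_entries => // j; apply: etab => //; exact: lt_le_trans Hl rs2.
      have h : t * (Bv + 1) < rW by rewrite -ltr_pdivlMr //; exact: lt_le_trans trs rs4.
      apply: le_lt_trans h; apply: ler_wpM2l; [exact: ltW | by rewrite lerDl].
    - by split => //=; exact: etaT.
  have HUs := HU (x l) (- g l) s (lt_le_trans Hl rs1) (etab l Nl (lt_le_trans Hl rs2))
     (ltac:(by apply/andP; split; [exact: s0' | exact: lt_le_trans srs rs1])).
  rewrite GxS ?Gx0 in HUs; last by apply/andP; split.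
  have [dR dRv] := Rt_d (x l) (- g l) (Mx l) (ltac:(rewrite -[- g l]scale1r; exact: etaT)).
  have [s' [/andP[s'0 s'rs] HP]] := @Pexp R n F (Rt (x l)) (x l) (- g l) HdF HcF dR dRv (Rt0 _ (Mx l)) ef ef0 rs rs0.
  have HUs' := HU (x l) (- g l) s' (lt_le_trans Hl rs1) (etab l Nl (lt_le_trans Hl rs2))
     (ltac:(by apply/andP; split; [exact: s'0 | exact: lt_le_trans s'rs rs1])).
  rewrite GxS ?Gx0 in HUs'; last by apply/andP; split.
  have sumE : \sum_(i < n) (- g l) 0 i * derive F (x l) 'e_i = - D.
    rewrite /D enormE.
    have -> : \sum_(i < n) (- g l) 0 i * derive F (x l) 'e_i = dotv (- g l) (egrad F (x l)).
      by rewrite /dotv; apply: eq_bigr => i _; rewrite [egrad _ _ _ _]mxE.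
    by rewrite dotvNl dotvC gg.
  rewrite sumE in HP.
  have h8 : 3 * ef = (1 - sigma) * dl ^+ 2 by rewrite /ef; field.
  exact: (@arith R _ _ _ _ _ _ _ _ _ _ s0' s'0 s1 Ddl h8 HP HUs' HUs fail').
split => //.
- move=> e e0; have [N HN] := @decay R delta K th_delta (ltac:(by rewrite td0 td1))
    (fun l => proj2 (pos l))
    (fun l Kl => ltac:(case: (step l) => [[_ [_ -> _]]|[nK _]] //))
    (fun l nKl => ltac:(case: (step l) => [[Kl _]|[_ [_ -> _]]] //)) Kinf e e0.
  by exists N => l Nl _; exact: HN.
- move=> e e0; have [N HN] := @decay R mu K th_mu (ltac:(by rewrite tm0 tm1))
    (fun l => proj1 (pos l))
    (fun l Kl => ltac:(case: (step l) => [[_ [-> _ _]]|[nK _]] //))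
    (fun l nKl => ltac:(case: (step l) => [[Kl _]|[_ [-> _ _]]] //)) Kinf e e0.
  by exists N => l Nl _; exact: HN.
Qed.
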